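(* Let $\mathcal{A}$ be a union-closed family with base set $[n]$ and height $h$, and suppose $|\mathcal{A}|>1$. Then there exists an element of $[n]$ that is contained in at least $\frac{|\mathcal{A}|+h-3}{h-1}$ member sets of $\mathcal{A}$.
   Context: A family of sets $\mathcal{A}$ is union-closed if it is a finite family of distinct finite sets with at least one nonempty member set, and $X,Y\in\mathcal{A}$ implies $X\cup Y\in\mathcal{A}$ (the empty set may be a member). The base set $\bigcup_{A\in\mathcal{A}}A$ is denoted $[n]=\{1,\dots,n\}$. A chain in $\mathcal{A}$ is a subfamily any two distinct members of which are comparable under proper inclusion; the height $h$ of $\mathcal{A}$ is the maximum size of a chain in $\mathcal{A}$. *)

(* Defs.v *)
From mathcomp Require Import all_boot all_order all_algebra.
Set Implicit Arguments. Unset Strict Implicit. Unset Printing Implicit Defensive.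

(* Ground set [n] = {1,...,n} is represented by 'I_n = {0,...,n-1}. *)

Definition union_closed (n : nat) (A : {set {set 'I_n}}) : Prop :=
  (exists2 X, X \in A & X != set0) /\
  (forall X Y, X \in A -> Y \in A -> X :|: Y \in A).

Definition has_base_set (n : nat) (A : {set {set 'I_n}}) : Prop :=
  \bigcup_(X in A) X = [set: 'I_n].

Definition is_chain (n : nat) (C : {set {set 'I_n}}) : bool :=
  [forall X in C, forall Y in C, (X != Y) ==> ((X \proper Y) || (Y \proper X))].

Definition height (n : nat) (A : {set {set 'I_n}}) : nat :=
  \max_(C in powerset A | is_chain C) #|C|.

Definition degree (n : nat) (A : {set {set 'I_n}}) (i : 'I_n) : nat :=
  #|[set X in A | i \in X]|.

(* Main.v *)
Require Import Defs.
From mathcomp Require Import all_boot all_order all_algebra.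
From mathcomp Require Import zify ring lra.
Import GRing.Theory Num.Theory.
Local Open Scope ring_scope.
Local Open Scope nat_scope.

Lemma arith a k m d D : (3 <= k)%N -> (2 <= m)%N -> (m <= a)%N -> (d.+1 <= D)%N ->
  ((k - 1) * (a - m) + 3 < a + k)%N -> (m + (k - 1) <= (k - 1 - 1) * d + 3)%N ->
  (a + k <= (k - 1) * D + 3)%N.
Proof.
move=> k3 m2 ma dD.
have : ((k-1) * d.+1 <= (k-1) * D)%N by rewrite leq_mul2l dD orbT.
have [c ->] : exists c, a = m + c by exists (a - m); lia.
have [t ->] : exists t, k = t + 3 by exists (k - 3); lia.
have -> : (m + c - m = c)%N by lia.
have -> : (t + 3 - 1 = t.+2)%N by lia.
have -> : (t.+2 - 1 = t.+1)%N by lia.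
move=> hD bad Hy.
have cd : (c <= d)%N.
  by rewrite -(leq_pmul2l (ltn0Sn t)); move: bad Hy; rewrite !mulSn; lia.
move: hD bad Hy; rewrite !mulSn !mulnS; lia.
Qed.

Lemma arith2 a k : (2 <= k)%N -> (1 < a)%N -> ((k - 1) * (a - 1) + 3 < a + k)%N -> False.
Proof.
case: k => [|[|k]] //; case: a => [|[|a]] // _ _.
rewrite !subSS !subn0 !mulSn !mulnS. lia.
Qed.

Section Aux.
Variable n : nat.
Implicit Types A C : {set {set 'I_n}}.

Lemma chain_le_height A C : C \subset A -> is_chain C -> (#|C| <= height A)%N.
Proof.
move=> sCA ch; rewrite /height.
by apply: (leq_bigmax_cond (P := fun C => (C \in powerset A) && is_chain C)); rewrite powersetE sCA.
Qed.

Lemma height_le A m : (forall C, C \subset A -> is_chain C -> (#|C| <= m)%N) ->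
  (height A <= m)%N.
Proof.
move=> H; rewrite /height; apply/bigmax_leqP => C /andP [].
by rewrite powersetE => sCA ch; apply: H.
Qed.

Lemma height2 A : (forall X Y, X \in A -> Y \in A -> X :|: Y \in A) ->
  (1 < #|A|)%N -> (2 <= height A)%N.
Proof.
move=> ucA c2.
have [X0 X0A]: exists X0, X0 \in A by apply/card_gt0P; apply: ltnW.
have [U /maxsetP [UA Umax] _] := maxset_exists (P := mem A) X0A.
have {}UA : U \in A := UA.
have subU : forall B, B \in A -> B \subset U.
  move=> B BA; have := Umax (B :|: U) (ucA _ _ BA UA) (subsetUr _ _).
  by move=> e; rewrite -e subsetUl.
have [M [MA MU]]: exists B0, B0 \in A /\ B0 != U.
  have : (1 < #|A|)%N := c2.
  rewrite (cardsD1 U) UA ltnS card_gt0 => /set0Pn [B /setD1P [BU BA]].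
  by exists B.
have MpU : M \proper U by rewrite properEneq MU subU.
have ch : is_chain [set M; U].
  apply/forallP => X; apply/implyP => /set2P hX.
  apply/forallP => Y; apply/implyP => /set2P hY; apply/implyP => XY.
  case: hX hY XY => -> [] -> //; rewrite ?eqxx // => _; by rewrite MpU ?orbT.
have sub2 : [set M; U] \subset A by apply/subsetP => X /set2P [] ->.
have := chain_le_height _ _ sub2 ch.
by rewrite cards2 MU.
Qed.

Lemma main (N : nat) : forall A k,
  (#|A| <= N)%N ->
  (forall X Y, X \in A -> Y \in A -> X :|: Y \in A) -> (1 < #|A|)%N ->
  (height A <= k)%N ->
  exists x, (#|A| + k <= (k - 1) * degree A x + 3)%N.
Proof.
elim: N => [|N IH] A k.
  by move=> c0 _ c2 _; exfalso; lia.
move=> cardA ucA c2 hk.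
have [X0 X0A]: exists X0, X0 \in A by apply/card_gt0P; apply: ltnW.
have [U /maxsetP [UA Umax] _] := maxset_exists (P := mem A) X0A.
have {}UA : U \in A := UA.
have subU : forall B, B \in A -> B \subset U.
  move=> B BA; have := Umax (B :|: U) (ucA _ _ BA UA) (subsetUr _ _).
  by move=> e; rewrite -e subsetUl.
have [B0 [B0A B0U]]: exists B0, B0 \in A /\ B0 != U.
  have : (1 < #|A|)%N := c2.
  rewrite (cardsD1 U) UA ltnS card_gt0 => /set0Pn [B /setD1P [BU BA]].
  by exists B.
have [M /maxsetP [/andP [MA MU] Mmax] _] :=
  maxset_exists (P := fun B => (B \in A) && (B != U)) (introT andP (conj B0A B0U)).
have MsubU := subU _ MA.
have MpU : M \proper U by rewrite properEneq MU MsubU.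
have [_ [x xU xM]] := properP MpU.
have chain2 : forall B : {set 'I_n}, B \proper U -> is_chain [set B; U].
  move=> B BpU; apply/forallP => X; apply/implyP => /set2P hX.
  apply/forallP => Y; apply/implyP => /set2P hY; apply/implyP => XY.
  case: hX hY XY => -> [] -> //; rewrite ?eqxx // => _; by rewrite BpU ?orbT.
have k2 : (2 <= k)%N.
  have sub2 : [set M; U] \subset A by apply/subsetP => X /set2P [] ->.
  have := chain_le_height _ _ sub2 (chain2 _ MpU).
  rewrite cards2 MU /= => h; clear -h hk; lia.
pose AM := [set B in A | B \subset M].
have AMA : AM \subset A by apply/subsetP => B; rewrite inE => /andP [].
have degx : (#|A| - #|AM| <= degree A x)%N.
  rewrite -{1}(setIidPr AMA) -cardsD /degree; apply: subset_leq_card.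
  apply/subsetP => B; rewrite !inE => /andP [Bn BA]; rewrite BA /=.
  apply/negPn/negP => xB; move: Bn; rewrite BA /= => /negP; apply.
  have BM : B :|: M \in A by apply: ucA.
  have BMU : B :|: M != U.
    by apply/eqP => e; move: xU; rewrite -e inE (negPf xB) (negPf xM).
  have := Mmax (B :|: M) (introT andP (conj BM BMU)) (subsetUr _ _).
  by move=> e; rewrite -e subsetUl.
have MAM : M \in AM by rewrite inE MA subxx.
have m1 : (1 <= #|AM|)%N by apply/card_gt0P; exists M.
have AMle : (#|AM| <= #|A|)%N := subset_leq_card AMA.
case: (leqP (#|A| + k) ((k - 1) * (#|A| - #|AM|) + 3)) => [good|bad].
  exists x; apply: leq_trans good _; rewrite leq_add2r leq_mul2l degx orbT //.
have m2 : (1 < #|AM|)%N.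
  rewrite ltn_neqAle m1 andbT; apply/eqP => e; move: bad; rewrite -e.
  exact: arith2.
have UAM : U \notin AM.
  by rewrite inE UA /=; apply/negP => UM; move: MU; rewrite eqEsubset MsubU UM.
have AMlt : (#|AM| < #|A|)%N.
  by rewrite ltn_neqAle AMle andbT; apply/eqP => e;
     move: UAM; have := subset_cardP e AMA => ->; rewrite UA.
have ucAM : forall X Y, X \in AM -> Y \in AM -> X :|: Y \in AM.
  move=> X Y; rewrite !inE => /andP [XA XM] /andP [YA YM].
  by rewrite ucA // subUset XM YM.
have hAM : (height AM <= k - 1)%N.
  apply: height_le => C sC ch.
  have sCU : forall X, X \in C -> X \proper U.
    move=> X XC; have := subsetP sC _ XC; rewrite inE => /andP [_ XM].
    exact: sub_proper_trans XM MpU.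
  have UC : U \notin C by apply/negP => /sCU; rewrite properE subxx.
  have : (#|U |: C| <= k)%N.
    apply: (leq_trans _ hk); apply: chain_le_height.
    - apply/subsetP => X /setU1P [-> //|XC].
      by have := subsetP sC _ XC; rewrite inE => /andP [].
    - apply/forallP => X; apply/implyP => /setU1P hX.
      apply/forallP => Y; apply/implyP => /setU1P hY; apply/implyP => XY.
      case: hX hY XY => [->|XC] [->|YC]; rewrite ?eqxx //.
      + by move=> _; rewrite sCU ?orbT.
      + by move=> _; rewrite sCU.
      + by move=> XY; move: ch => /forallP /(_ X) /implyP /(_ XC)
                 /forallP /(_ Y) /implyP /(_ YC) /implyP /(_ XY).
  rewrite cardsU1 UC add1n; clear; case: k => // k; by rewrite subSS subn0 ltnS.
have [y Hy] := IH AM (k - 1) (leq_trans AMlt cardA : #|AM| < N.+1) ucAM m2 hAM.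
have k3 : (3 <= k)%N.
  have h := leq_trans (height2 _ ucAM m2) hAM; clear -h; lia.
have d1 : (1 <= degree AM y)%N.
  rewrite lt0n; apply/eqP => e; move: Hy; rewrite e; clear -k3 m2; lia.
exists y; apply: (arith _ _ _ _ _ k3 m2 AMle _ bad Hy).
have [B] : exists B, B \in [set X in AM | y \in X].
  by apply/card_gt0P.
rewrite !inE => /andP [/andP [BA BM] yB].
have yU : y \in U by apply: (subsetP (subU _ BA)).
have sub : U |: [set X in AM | y \in X] \subset [set X in A | y \in X].
  apply/subsetP => X /setU1P [->|]; first by rewrite inE UA yU.
  by rewrite !inE => /andP [/andP [-> _] ->].
have := subset_leq_card sub; rewrite cardsU1.
have -> : U \notin [set X in AM | y \in X] by rewrite inE (negPf UAM).
done.
Qed.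
End Aux.

Local Open Scope ring_scope.

Theorem theorem1p2 (n : nat) (A : {set {set 'I_n}}) (h : nat) :
  union_closed A -> has_base_set A -> height A = h -> (1 < #|A|)%N ->
  exists i : 'I_n,
    ((#|A|%:R + h%:R - 3) / (h%:R - 1) : rat) <= (degree A i)%:R.
Proof.
move=> [_ ucA] _ hA c2.
have h2 : (2 <= h)%N by rewrite -hA; apply: height2.
have [x Hx] := @main n #|A| A h (leqnn _) ucA c2 (eq_leq hA).
exists x.
have hpos : (0 : rat) < h%:R - 1.
  by rewrite subr_gt0 (ltr_nat rat 1 h).
rewrite ler_pdivrMr //.
have H : ((#|A| + h)%:R <= ((h - 1) * degree A x + 3)%:R :> rat) by rewrite ler_nat.
move: H; rewrite !natrD natrM natrB; last by apply: ltnW.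
move=> H; lra.
Qed.
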